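(* Let $f:\mathbb{R}^n\to\mathbb{R}\cup\{+\infty\}$ be a closed proper convex function and $x^*\in\arg\min_x f(x)$. Let $(A_k),(a_k),(b_k),(c_k)$, $k\geqslant0$, be real sequences with $a_k>0$, $c_k>0$ for all $k$, $b_k>0$ for $k\geqslant1$, satisfying $$A_k=a_kb_k,\quad A_{k+1}-A_k\leqslant a_k,\quad a_k\leqslant c_k,\quad A_0=b_0=0.$$ Let $x_0\in\mathbb{R}^n$, $z_0=x_0$, and for $k\geqslant0$ $$y_{k+1}=\frac{1}{b_k+1}z_k+\frac{b_k}{b_k+1}x_k,\qquad x_{k+1}=\mathrm{prox}_{\frac{c_k}{b_k+1}f}(y_{k+1}),\qquad z_{k+1}=z_k+\frac{a_k}{c_k}(b_k+1)(x_{k+1}-y_{k+1}).$$ Then for every $k\geqslant1$, $$f(x_k)-f(x^* )\leqslant\frac{\|x_0-x^*\|^2}{2A_k},$$ and for every $k\geqslant0$, $$\min_{0\leqslant j\leqslant k}\Big\|\frac{(b_j+1)x_{j+1}-b_jx_j-z_j}{c_j}\Big\|^2\leqslant\frac{\|x_0-x^*\|^2}{\sum_{j=0}^ka_j^2}.$$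
   Context: For $\gamma>0$, $\mathrm{prox}_{\gamma f}(y)=\arg\min_x\{f(x)+\frac{1}{2\gamma}\|x-y\|^2\}$. $\|\cdot\|$ is the Euclidean norm. *)

(* Defs.v *)
From HB Require Import structures.
From mathcomp Require Import all_boot all_order all_algebra.
From mathcomp Require Import all_classical all_reals all_analysis.
Set Implicit Arguments. Unset Strict Implicit. Unset Printing Implicit Defensive.
Import Order.TTheory GRing.Theory Num.Theory.
Import numFieldNormedType.Exports.
Local Open Scope classical_set_scope.
Local Open Scope ring_scope.

Definition enorm (R : realType) (n : nat) (v : 'rV[R]_n) : R :=
  Num.sqrt (\sum_(i < n) (v ord0 i) ^+ 2).

Definition convex_ext (R : realType) (n : nat) (f : 'rV[R]_n -> \bar R) : Prop :=
  forall (x y : 'rV[R]_n) (t : R), 0 < t -> t < 1 ->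
    (f (t *: x + (1 - t) *: y)%R <= t%:E * f x + (1 - t)%:E * f y)%E.

Definition proper_fun (R : realType) (n : nat) (f : 'rV[R]_n -> \bar R) : Prop :=
  (exists x, (f x < +oo)%E) /\ (forall x, f x != -oo%E).

Definition closed_fun (R : realType) (n : nat) (f : 'rV[R]_n -> \bar R) : Prop :=
  forall a : R, closed [set x | (f x <= a%:E)%E].

Definition is_prox (R : realType) (n : nat) (f : 'rV[R]_n -> \bar R) (gamma : R)
  (y p : 'rV[R]_n) : Prop :=
  forall u, (f p + ((2 * gamma)^-1 * enorm (p - y) ^+ 2)%:E
             <= f u + ((2 * gamma)^-1 * enorm (u - y) ^+ 2)%:E)%E.

(* Main.v *)
Require Import Defs.
From HB Require Import structures.
From mathcomp Require Import all_boot all_order all_algebra.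
From mathcomp Require Import all_classical all_reals all_analysis.
From mathcomp Require Import ring lra.
Import Order.TTheory GRing.Theory Num.Theory.
Import numFieldNormedType.Exports.
Local Open Scope classical_set_scope.
Local Open Scope ring_scope.
Set Implicit Arguments. Unset Strict Implicit.

Section Dot.
Variables (R : realType) (n : nat).
Definition dot (u v : 'rV[R]_n) : R := \sum_(i < n) u ord0 i * v ord0 i.

Lemma dotC u v : dot u v = dot v u.
Proof. by apply: eq_bigr => i _; rewrite mulrC. Qed.
Lemma dotDl u v w : dot (u + v) w = dot u w + dot v w.
Proof. by rewrite /dot -big_split; apply: eq_bigr => i _; rewrite !mxE mulrDl. Qed.
Lemma dotZl (t : R) u w : dot (t *: u) w = t * dot u w.
Proof. by rewrite /dot mulr_sumr; apply: eq_bigr => i _; rewrite !mxE mulrA. Qed.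
Lemma dotNl u w : dot (- u) w = - dot u w.
Proof. by rewrite -scaleN1r dotZl mulN1r. Qed.
Lemma dotBl u v w : dot (u - v) w = dot u w - dot v w.
Proof. by rewrite dotDl dotNl. Qed.
Lemma dotDr u v w : dot w (u + v) = dot w u + dot w v.
Proof. by rewrite !(dotC w) dotDl. Qed.
Lemma dotZr (t : R) u w : dot w (t *: u) = t * dot w u.
Proof. by rewrite !(dotC w) dotZl. Qed.
Lemma dotNr u w : dot w (- u) = - dot w u.
Proof. by rewrite !(dotC w) dotNl. Qed.
Lemma dotBr u v w : dot w (u - v) = dot w u - dot w v.
Proof. by rewrite !(dotC w) dotBl. Qed.
Lemma dot_ge0 u : 0 <= dot u u.
Proof. by apply: sumr_ge0 => i _; rewrite -expr2 sqr_ge0. Qed.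
Lemma enorm2 u : enorm u ^+ 2 = dot u u.
Proof.
rewrite /enorm sqr_sqrtr; last exact: dot_ge0.
by apply: eq_bigr => i _; rewrite expr2.
Qed.
End Dot.
Arguments dot {R n}.

Lemma dot_exp (R : realType) (n : nat) (t : R) (d e : 'rV[R]_n) :
  dot (t *: d + e) (t *: d + e) = t * (t * dot d d) + 2 * t * dot d e + dot e e.
Proof. rewrite !dotDl !dotDr !dotZl !dotZr (dotC e d); ring. Qed.

Lemma prox_sub (R : realType) (n : nat) (f : 'rV[R]_n -> \bar R) (gam : R)
  (y p u : 'rV[R]_n) (fp fu : R) :
  convex_ext f -> 0 < gam -> is_prox f gam y p -> f p = fp%:E -> f u = fu%:E ->
  fp + gam^-1 * dot (y - p) (u - p) <= fu.
Proof.
move=> hconv gam0 hprox hfp hfu.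
set ig := gam^-1.
have ig0 : 0 < ig by rewrite invr_gt0.
have i2 : (2 * gam)^-1 = ig / 2 by rewrite invfM mulrC.
set X := fp + ig * dot (y - p) (u - p) - fu.
set K := ig / 2 * dot (u - p) (u - p).
have K0 : 0 <= K by apply: mulr_ge0; [apply: divr_ge0; lra | apply: dot_ge0].
have key : forall t, 0 < t -> t < 1 -> t * X <= t * (t * K).
  move=> t t0 t1.
  have hc := hconv u p t t0 t1.
  have hp := hprox (t *: u + (1 - t) *: p).
  have := le_trans hp (leeD2r _ hc).
  rewrite hfu hfp -!EFinM -!EFinD lee_fin !enorm2 i2.
  have -> : t *: u + (1 - t) *: p - y = t *: (u - p) + (p - y).
    by apply/rowP => i; rewrite !mxE; ring.
  rewrite dot_exp.
  have -> : dot (u - p) (p - y) = - dot (y - p) (u - p).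
    by rewrite dotC -dotNl opprB.
  rewrite /X /K => h.
  nra.
rewrite -subr_ge0; rewrite leNgt; apply/negP => hX.
have {}hX : 0 < X by rewrite /X; lra.
set t := X / (X + K + 1).
have hd : 0 < X + K + 1 by lra.
have t0 : 0 < t by apply: divr_gt0.
have t1 : t < 1 by rewrite /t ltr_pdivrMr // mul1r; lra.
have h1 : X <= t * K by rewrite -(ler_pM2l t0); exact: key.
have : t * K < X.
  by rewrite /t mulrAC ltr_pdivrMr //; nra.
lra.
Qed.

Lemma min_sum (R : realType) k (G w : nat -> R) (idx : R) :
  (forall j, 0 <= w j) ->
  \big[Num.min/idx]_(j < k.+1) G j * \sum_(j < k.+1) w j <= \sum_(j < k.+1) w j * G j.
Proof.
move=> w0; rewrite mulr_sumr; apply: ler_sum => j _.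
by rewrite mulrC ler_wpM2l //; exact: bigmin_le.
Qed.

Theorem theorem6 (R : realType) (n : nat) (f : 'rV[R]_n -> \bar R)
  (xstar : 'rV[R]_n) (A a b c : nat -> R) (x y z : nat -> 'rV[R]_n) :
  closed_fun f -> proper_fun f -> convex_ext f ->
  (forall u, (f xstar <= f u)%E) ->
  (forall k, 0 < a k) -> (forall k, 0 < c k) -> (forall k, (1 <= k)%N -> 0 < b k) ->
  (forall k, A k = a k * b k) ->
  (forall k, A k.+1 - A k <= a k) ->
  (forall k, a k <= c k) ->
  A 0%N = 0 -> b 0%N = 0 ->
  z 0%N = x 0%N ->
  (forall k, y k.+1 = (b k + 1)^-1 *: z k + (b k / (b k + 1)) *: x k) ->
  (forall k, is_prox f (c k / (b k + 1)) (y k.+1) (x k.+1)) ->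
  (forall k, z k.+1 = z k + (a k / c k * (b k + 1)) *: (x k.+1 - y k.+1)) ->
  (forall k, (1 <= k)%N ->
     (f (x k) - f xstar <= (enorm (x 0%N - xstar) ^+ 2 / (2 * A k))%:E)%E) /\
  (forall k,
     \big[Num.min/enorm ((c 0%N)^-1 *: ((b 0%N + 1) *: x 1%N - b 0%N *: x 0%N - z 0%N)) ^+ 2]_(j < k.+1)
        enorm ((c j)^-1 *: ((b j + 1) *: x j.+1 - b j *: x j - z j)) ^+ 2
     <= enorm (x 0%N - xstar) ^+ 2 / \sum_(j < k.+1) a j ^+ 2).
Proof.
move=> hcl hpr hconv hmin ha hc hb hA hAd hac hA0 hb0 hz0 hy hprox hz.
have [fs hfs] : exists fs, f xstar = fs%:E.
  case E: (f xstar) => [r| |]; first by exists r.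
  - have [[w hw] _] := hpr; have := hmin w; rewrite E leye_eq => /eqP hw'.
    by rewrite hw' in hw.
  - by have := hpr.2 xstar; rewrite E.
have bnn : forall k, 0 <= b k by case=> [|k]; [rewrite hb0 | apply/ltW/hb].
have hb1 : forall k, 0 < b k + 1 by move=> k; have := bnn k; lra.
set F := fun k => fine (f (x k)).
have hF : forall k, f (x k.+1) = (F k.+1)%:E.
  move=> k; rewrite /F; case E: (f (x k.+1)) => [r| |] //; exfalso.
  - move: (hprox k xstar); rewrite /is_prox E hfs -EFinD addye //.
  - by have := hpr.2 (x k.+1); rewrite E.
set g := fun k => ((b k + 1) / c k) *: (y k.+1 - x k.+1).
have hsub : forall k u fu, f u = fu%:E -> F k.+1 + dot (g k) (u - x k.+1) <= fu.
  move=> k u fu hu.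
  have gam0 : 0 < c k / (b k + 1) by apply: divr_gt0.
  have := prox_sub hconv gam0 (hprox k) (hF k) hu.
  by rewrite invf_div /g dotZl.
have hzg : forall k, z k.+1 = z k - a k *: g k.
  by move=> k; rewrite hz /g; apply/rowP => i; rewrite !mxE; ring.
have hkey : forall k, (b k + 1) *: x k.+1 - b k *: x k - z k = - (c k) *: g k.
  move=> k; rewrite /g hy; apply/rowP => i; rewrite !mxE.
  have := hc k; have := hb1 k => h1 h2.
  field; apply/andP; split; rewrite gt_eqF //.
have hterm : forall k, enorm ((c k)^-1 *: ((b k + 1) *: x k.+1 - b k *: x k - z k)) ^+ 2
    = dot (g k) (g k).
  move=> k; rewrite hkey enorm2 scalerA mulrN mulVf ?gt_eqF // scaleN1r.
  by rewrite dotNl dotNr opprK.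
clearbody g.
set E := fun k => A k * (F k - fs) + dot (z k - xstar) (z k - xstar) / 2.
have hAge : forall k, 0 <= A k * (F k - fs).
  case=> [|k]; first by rewrite hA0 mul0r.
  apply: mulr_ge0; first by rewrite hA; apply/ltW/mulr_gt0; [apply: ha|apply: hb].
  by have := hmin (x k.+1); rewrite hfs hF lee_fin subr_ge0.
have step : forall k, E k.+1 + a k ^+ 2 * dot (g k) (g k) / 2 <= E k.
  move=> k.
  have h1 := hsub k xstar fs hfs.
  have h2 : A k * (F k.+1 + dot (g k) (x k - x k.+1)) <= A k * F k.
    case: k h1 => [|k] h1; first by rewrite hA0 !mul0r.
    apply: ler_wpM2l; first by rewrite hA; apply/ltW/mulr_gt0; [apply: ha|apply: hb].
    exact: hsub _ _ _ (hF k).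
  have h3 : fs <= F k.+1 by have := hmin (x k.+1); rewrite hfs hF lee_fin.
  have e1 : (A k.+1 - A k - a k) * (F k.+1 - fs) <= 0.
    apply: mulr_le0_ge0; have := hAd k; lra.
  have G0 := dot_ge0 (g k).
  have e4 : (a k ^+ 2 - a k * c k) * dot (g k) (g k) <= 0.
    apply: mulr_le0_ge0 => //; have := hac k; have := ha k; nra.
  have hk := hkey k.
  have hk2 : dot (g k) ((b k + 1) *: x k.+1 - b k *: x k - z k) = dot (g k) (- (c k) *: g k).
    by rewrite hk.
  rewrite !dotBr !dotZr in hk2.
  have ez : z k.+1 - xstar = (- a k) *: g k + (z k - xstar).
    by rewrite hzg; apply/rowP => i; rewrite !mxE; ring.
  rewrite /E ez dot_exp.
  rewrite !dotBr in h1 h2 *.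
  rewrite hA in h2 e1 *.
  have e2 : a k * (F k.+1 - fs) <= a k * (dot (g k) (x k.+1) - dot (g k) xstar).
    apply: ler_wpM2l; [exact/ltW/ha | lra].
  have e5 : a k * ((b k + 1) * dot (g k) (x k.+1) - b k * dot (g k) (x k) - dot (g k) (z k))
     = a k * (- c k * dot (g k) (g k)) by rewrite hk2.
  lra.
have hsum : forall k, E k + \sum_(j < k) a j ^+ 2 * dot (g j) (g j) / 2 <= E 0%N.
  elim=> [|k IH]; first by rewrite big_ord0 addr0.
  rewrite big_ord_recr /=; have := step k; lra.
have E0 : E 0%N = dot (x 0%N - xstar) (x 0%N - xstar) / 2.
  by rewrite /E hA0 mul0r add0r hz0.
have sum0 : forall k, 0 <= \sum_(j < k) a j ^+ 2 * dot (g j) (g j) / 2.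
  move=> k; apply: sumr_ge0 => j _; apply: divr_ge0 => //.
  by apply: mulr_ge0; [exact: sqr_ge0 | exact: dot_ge0].
split.
  case=> [//|k] _.
  have := hsum k.+1; have := sum0 k.+1; have := hAge k.+1.
  have := dot_ge0 (z k.+1 - xstar).
  rewrite E0 /E => h1 h2 h3 h4.
  have hAp : 0 < A k.+1 by rewrite hA; apply: mulr_gt0; [apply: ha|apply: hb].
  rewrite hF hfs -EFinB lee_fin enorm2 ler_pdivlMr; last by rewrite mulr_gt0.
  lra.
move=> k.
have Sp : 0 < \sum_(j < k.+1) a j ^+ 2.
  by rewrite big_ord_recl; apply: ltr_wpDr; [apply: sumr_ge0 => j _; exact: sqr_ge0 | apply: exprn_gt0].
rewrite ler_pdivlMr //.
have hm := @min_sum R k (fun j => enorm ((c j)^-1 *: ((b j + 1) *: x j.+1 - b j *: x j - z j)) ^+ 2) (fun j => a j ^+ 2)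
  (enorm ((c 0%N)^-1 *: ((b 0%N + 1) *: x 1%N - b 0%N *: x 0%N - z 0%N)) ^+ 2) (fun j => sqr_ge0 _).
apply: le_trans hm _.
under eq_bigr => j _ do rewrite hterm.
have := hsum k.+1; have := dot_ge0 (z k.+1 - xstar); have := hAge k.+1.
rewrite E0 /E enorm2 -mulr_suml => h1 h2 h3.
lra.
Qed.
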